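(* Let $0\to(M,\alpha_M)\xrightarrow{t}(G,\alpha_G)\xrightarrow{p}(Q,\mathrm{Id}_Q)\to0$ be a split short exact sequence of $\alpha$-perfect Hom-Leibniz algebras with splitting homomorphism $s:(Q,\mathrm{Id}_Q)\to(G,\alpha_G)$, $p\circ s=\mathrm{Id}_Q$. Let $\tau=\mathfrak{uce}_\alpha(t)$, $\pi=\mathfrak{uce}_\alpha(p):\mathfrak{uce}_\alpha(G)\to\mathfrak{uce}(Q)$. Then $\mathrm{Ker}(\pi)$ equals the subspace $\{\alpha_M(M),\alpha_M(M)\}$ of $\mathfrak{uce}_\alpha(G)$ spanned by the classes $\{t(\alpha_M(m_1)),t(\alpha_M(m_2))\}$, $m_1,m_2\in M$, and this subspace equals $\tau(\mathfrak{uce}_\alpha(M))$.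
   Context: Hom-Leibniz algebras are multiplicative: $(L,\alpha_L)$ is a $\mathbb{K}$-vector space with bilinear bracket and linear $\alpha_L$ such that $[\alpha_L(x),[y,z]]=[[x,y],\alpha_L(z)]-[[x,z],\alpha_L(y)]$ and $\alpha_L[x,y]=[\alpha_L(x),\alpha_L(y)]$; homomorphisms preserve brackets and commute with structure maps. $(L,\alpha_L)$ is $\alpha$-perfect if $L=[\alpha_L(L),\alpha_L(L)]$ (so $(Q,\mathrm{Id}_Q)$ is $\alpha$-perfect iff $Q=[Q,Q]$). For $\alpha$-perfect $(L,\alpha_L)$: $I_L\subseteq\alpha_L(L)\otimes\alpha_L(L)$ is spanned by $-[x_1,x_2]\otimes\alpha_L(x_3)+[x_1,x_3]\otimes\alpha_L(x_2)+\alpha_L(x_1)\otimes[x_2,x_3]$; $\mathfrak{uce}_\alpha(L)=(\alpha_L(L)\otimes\alpha_L(L))/I_L$ with classes $\{\alpha_L(x_1),\alpha_L(x_2)\}$, bracket $[\{a,b\},\{c,e\}]=\{[a,b],[c,e]\}$, endomorphism $\overline{\alpha}\{\alpha_L(x_1),\alpha_L(x_2)\}=\{\alpha_L^2(x_1),\alpha_L^2(x_2)\}$. For $\alpha_L=\mathrm{Id}$ this is $\mathfrak{uce}(Q)=(Q\otimes Q)/I_Q$ with identity endomorphism. For a homomorphism $g$ of $\alpha$-perfect algebras, $\mathfrak{uce}_\alpha(g)\{\alpha(x_1),\alpha(x_2)\}=\{\alpha(g(x_1)),\alpha(g(x_2))\}$. *)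

(* Defs.v *)
From HB Require Import structures.
From mathcomp Require Import all_boot all_order all_algebra.
Set Implicit Arguments. Unset Strict Implicit. Unset Printing Implicit Defensive.
Import GRing.Theory.
Local Open Scope ring_scope.

Record HLA (K : fieldType) := {
  hla_V :> lmodType K;
  hla_br : hla_V -> hla_V -> hla_V;
  hla_alpha : {linear hla_V -> hla_V};
  hla_brl : forall (k : K) x y z, hla_br (k *: x + y) z = k *: hla_br x z + hla_br y z;
  hla_brr : forall (k : K) x y z, hla_br z (k *: x + y) = k *: hla_br z x + hla_br z y;
  hla_leib : forall x y z,
    hla_br (hla_alpha x) (hla_br y z)
    = hla_br (hla_br x y) (hla_alpha z) - hla_br (hla_br x z) (hla_alpha y);
  hla_mult : forall x y, hla_alpha (hla_br x y) = hla_br (hla_alpha x) (hla_alpha y)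
}.

Section Defs.
Variable K : fieldType.

Definition hla_hom (L H : HLA K) (f : {linear L -> H}) : Prop :=
  (forall x y, f (hla_br x y) = hla_br (f x) (f y)) /\
  (forall x, f (hla_alpha L x) = hla_alpha H (f x)).

Definition alpha_perfect (L : HLA K) : Prop :=
  forall z : L, exists l : seq (K * L * L),
    z = \sum_(e <- l) e.1.1 *: hla_br (hla_alpha L e.1.2) (hla_alpha L e.2).

(* Formal K-linear combinations of pairs (a,b): elements of the free vector
   space on pairs; the term (k,a,b) stands for k . (a (x) b). *)
Definition fsum (L : HLA K) := seq (K * L * L).

Definition fs_coef (L : HLA K) (w : fsum L) (a b : L) : K :=
  \sum_(e <- w | (e.1.2 == a) && (e.2 == b)) e.1.1.

Definition fs_eq (L : HLA K) (w w' : fsum L) : Prop :=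
  forall a b, fs_coef w a b = fs_coef w' a b.

Definition fs_scale (L : HLA K) (c : K) (w : fsum L) : fsum L :=
  [seq (c * e.1.1, e.1.2, e.2) | e <- w].

Definition fs_sub (L : HLA K) (w w' : fsum L) : fsum L := w ++ fs_scale (-1) w'.

(* all entries lie in alpha_L(L), i.e. w represents an element of
   the free space on alpha(L) x alpha(L) *)
Definition fs_on (L : HLA K) (w : fsum L) : Prop :=
  forall e, e \in w ->
    (exists x, e.1.2 = hla_alpha L x) /\ (exists y, e.2 = hla_alpha L y).

Definition fs_map (L H : HLA K) (f : L -> H) (w : fsum L) : fsum H :=
  [seq (e.1.1, f e.1.2, f e.2) | e <- w].

(* Generators of the subspace of the free vector space on alpha(L) x alpha(L)
   that is killed in uce_alpha(L) = (alpha(L) (x) alpha(L)) / I_L :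
   bilinearity relations of the tensor product, and the generators of I_L. *)
Definition rel_gen (L : HLA K) (g : fsum L) : Prop :=
  let al := hla_alpha L in
  let br := @hla_br K L in
  (exists x x' y, g = [:: (1, al x + al x', al y); (-1, al x, al y); (-1, al x', al y)])
  \/ (exists x y y', g = [:: (1, al x, al y + al y'); (-1, al x, al y); (-1, al x, al y')])
  \/ (exists (k : K) x y, g = [:: (1, k *: al x, al y); (- k, al x, al y)])
  \/ (exists (k : K) x y, g = [:: (1, al x, k *: al y); (- k, al x, al y)])
  \/ (exists x1 x2 x3, g = [:: (-1, br x1 x2, al x3); (1, br x1 x3, al x2);
                               (1, al x1, br x2 x3)]).

Definition uce_zero (L : HLA K) (w : fsum L) : Prop :=
  exists gs : seq (K * fsum L),
    (forall c g, (c, g) \in gs -> rel_gen g) /\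
    fs_eq w (flatten [seq fs_scale cg.1 cg.2 | cg <- gs]).

End Defs.

(* Main.v *)
Require Import Defs.
From mathcomp Require Import all_boot all_order all_algebra ring.
Set Implicit Arguments. Unset Strict Implicit. Unset Printing Implicit Defensive.
Import GRing.Theory.
Local Open Scope ring_scope.

Definition ev {K : fieldType} {L : HLA K} (f : L -> L -> K) (w : fsum L) : K :=
  \sum_(e <- w) e.1.1 * f e.1.2 e.2.

Lemma ev_cat {K : fieldType} {L : HLA K} f (w w' : fsum L) : ev f (w ++ w') = ev f w + ev f w'.
Proof. by rewrite /ev big_cat. Qed.

Lemma ev_scale {K : fieldType} {L : HLA K} f c (w : fsum L) : ev f (fs_scale c w) = c * ev f w.
Proof. by rewrite /ev /fs_scale big_map mulr_sumr; apply: eq_bigr => e _; rewrite mulrA. Qed.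

Lemma ev_sub {K : fieldType} {L : HLA K} f (w w' : fsum L) : ev f (fs_sub w w') = ev f w - ev f w'.
Proof. by rewrite /fs_sub ev_cat ev_scale mulN1r. Qed.

Lemma ev_map {K : fieldType} {L H : HLA K} (h : L -> H) f (w : fsum L) :
  ev f (fs_map h w) = ev (fun a b => f (h a) (h b)) w.
Proof. by rewrite /ev /fs_map big_map. Qed.

Lemma ev_flatten {K : fieldType} {L : HLA K} f (gs : seq (K * fsum L)) :
  ev f (flatten [seq fs_scale cg.1 cg.2 | cg <- gs]) = \sum_(cg <- gs) cg.1 * ev f cg.2.
Proof.
elim: gs => [|cg gs IH]; first by rewrite big_nil /ev big_nil.
by rewrite /= ev_cat IH ev_scale big_cons.
Qed.

Lemma ev_coef {K : fieldType} {L : HLA K} (S : seq (L * L)) (w : fsum L) f :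
  uniq S -> {subset [seq (e.1.2, e.2) | e <- w] <= S} ->
  ev f w = \sum_(pr <- S) fs_coef w pr.1 pr.2 * f pr.1 pr.2.
Proof.
move=> uS; elim: w => [|e w IH] sub.
  by rewrite /ev big_nil; apply/esym/big1 => pr _; rewrite /fs_coef big_nil mul0r.
have eS : (e.1.2, e.2) \in S by apply: sub; rewrite inE eqxx.
rewrite /ev big_cons -/(ev f w) IH; last by move=> x xw; apply: sub; rewrite inE xw orbT.
rewrite [in RHS](eq_bigr (fun pr => (if (e.1.2 == pr.1) && (e.2 == pr.2) then e.1.1 else 0) * f pr.1 pr.2
   + fs_coef w pr.1 pr.2 * f pr.1 pr.2)); last first.
  by move=> pr _; rewrite /fs_coef big_cons -/(fs_coef w _ _); case: (_ && _); rewrite ?mulrDl ?mul0r ?add0r.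
rewrite big_split /=; congr (_ + _).
rewrite (bigD1_seq (e.1.2, e.2)) //= !eqxx /= big1 ?addr0 // => pr.
case: pr => a b; rewrite xpair_eqE /= negb_and.
by rewrite (eq_sym e.1.2) (eq_sym e.2); case: (a == _); case: (b == _) => //= _; rewrite mul0r.
Qed.

Lemma fs_eqP {K : fieldType} {L : HLA K} (w w' : fsum L) :
  fs_eq w w' <-> forall f, ev f w = ev f w'.
Proof.
rewrite /fs_eq; split=> [H f|H a b].
  pose S := undup ([seq (e.1.2, e.2) | e <- w] ++ [seq (e.1.2, e.2) | e <- w']).
  have uS : uniq S by apply: undup_uniq.
  rewrite (@ev_coef _ _ S) //; last by move=> x xw; rewrite mem_undup mem_cat xw.
  rewrite (@ev_coef _ _ S w') //; last by move=> x xw; rewrite mem_undup mem_cat xw orbT.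
  by apply: eq_bigr => pr _; rewrite H.
have E v : fs_coef v a b = ev (fun x y => ((x == a) && (y == b))%:R) v.
  rewrite /fs_coef /ev big_mkcond; apply: eq_bigr => e _.
  by case: (_ && _); rewrite ?mulr1 ?mulr0.
by rewrite !E H.
Qed.

Definition RS {K : fieldType} {L : HLA K} (Phi : (L -> L -> K) -> K) : Prop :=
  exists gs : seq (K * fsum L), (forall c g, (c, g) \in gs -> rel_gen g) /\
    forall f, Phi f = \sum_(cg <- gs) cg.1 * ev f cg.2.

Lemma uce_zeroP {K : fieldType} {L : HLA K} (w : fsum L) :
  uce_zero w <-> RS (fun f => ev f w).
Proof.
split=> -[gs [Hg He]]; exists gs; split=> //.
  by move=> f; rewrite -ev_flatten; move/fs_eqP: He.
by apply/fs_eqP => f; rewrite ev_flatten.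
Qed.

Lemma RS_ext {K : fieldType} {L : HLA K} (Phi Psi : (L -> L -> K) -> K) :
  (forall f, Phi f = Psi f) -> RS Phi -> RS Psi.
Proof. by move=> E [gs [Hg He]]; exists gs; split=> // f; rewrite -E. Qed.

Lemma RS0 {K : fieldType} {L : HLA K} : RS (fun f : L -> L -> K => 0).
Proof. by exists [::]; split=> // f; rewrite big_nil. Qed.

Lemma RSD {K : fieldType} {L : HLA K} (Phi Psi : (L -> L -> K) -> K) :
  RS Phi -> RS Psi -> RS (fun f => Phi f + Psi f).
Proof.
move=> [gs [Hg He]] [gs' [Hg' He']]; exists (gs ++ gs'); split.
  by move=> c g; rewrite mem_cat => /orP[/Hg|/Hg'].
by move=> f; rewrite big_cat He He'.
Qed.

Lemma RSZ {K : fieldType} {L : HLA K} (c : K) (Phi : (L -> L -> K) -> K) :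
  RS Phi -> RS (fun f => c * Phi f).
Proof.
move=> [gs [Hg He]]; exists [seq (c * cg.1, cg.2) | cg <- gs]; split.
  by move=> c' g /mapP[[c0 g0] /Hg Hg0 [_ ->]].
by move=> f; rewrite He big_map mulr_sumr; apply: eq_bigr => cg _; rewrite mulrA.
Qed.

Lemma RSB {K : fieldType} {L : HLA K} (Phi Psi : (L -> L -> K) -> K) :
  RS Phi -> RS Psi -> RS (fun f => Phi f - Psi f).
Proof.
move=> H1 H2; apply: RS_ext (RSD H1 (RSZ (-1) H2)) => f; by rewrite mulN1r.
Qed.

Lemma RS_gen {K : fieldType} {L : HLA K} (g : fsum L) (Phi : (L -> L -> K) -> K) :
  rel_gen g -> (forall f, Phi f = ev f g) -> RS Phi.
Proof.
move=> Hg E; exists [:: (1, g)]; split.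
  by move=> c g'; rewrite inE => /eqP[_ ->].
by move=> f; rewrite big_cons big_nil addr0 mul1r.
Qed.

Lemma rel_gen_map {K : fieldType} {L H : HLA K} (h : {linear L -> H}) (g : fsum L) :
  hla_hom h -> rel_gen g -> rel_gen (fs_map h g).
Proof.
move=> [hb ha]; rewrite /rel_gen /=.
case=> [[x [x' [y ->]]]|[[x [y [y' ->]]]|[[k [x [y ->]]]|[[k [x [y ->]]]|[x1 [x2 [x3 ->]]]]]]].
- by left; exists (h x), (h x'), (h y); rewrite /fs_map /= linearD !ha.
- by right; left; exists (h x), (h y), (h y'); rewrite /fs_map /= linearD !ha.
- by right; right; left; exists k, (h x), (h y); rewrite /fs_map /= linearZ !ha.
- by right; right; right; left; exists k, (h x), (h y); rewrite /fs_map /= linearZ !ha.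
- by right; right; right; right; exists (h x1), (h x2), (h x3); rewrite /fs_map /= !hb !ha.
Qed.

Lemma RS_map {K : fieldType} {L H : HLA K} (h : {linear L -> H}) (Phi : (L -> L -> K) -> K) :
  hla_hom h -> RS Phi -> RS (fun f : H -> H -> K => Phi (fun a b => f (h a) (h b))).
Proof.
move=> hh [gs [Hg He]]; exists [seq (cg.1, fs_map h cg.2) | cg <- gs]; split.
  by move=> c' g /mapP[[c0 g0] /Hg Hg0 [_ ->]]; apply: rel_gen_map.
by move=> f; rewrite He big_map; apply: eq_bigr => cg _; rewrite ev_map.
Qed.

Lemma br0r {K : fieldType} {L : HLA K} (z : L) : hla_br z 0 = 0.
Proof.
have := hla_brr 1 0 0 z; rewrite !scale1r addr0 => H.
by apply: (@addrI _ (hla_br z 0)); rewrite addr0 -H.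
Qed.

Lemma br0l {K : fieldType} {L : HLA K} (z : L) : hla_br 0 z = 0.
Proof.
have := hla_brl 1 0 0 z; rewrite !scale1r addr0 => H.
by apply: (@addrI _ (hla_br 0 z)); rewrite addr0 -H.
Qed.

Lemma al_surj {K : fieldType} {L : HLA K} : alpha_perfect L ->
  forall g : L, exists x, g = hla_alpha L x.
Proof.
move=> P g; have [l ->] := P g.
exists (\sum_(e <- l) e.1.1 *: hla_br e.1.2 e.2).
by rewrite linear_sum; apply: eq_bigr => e _; rewrite linearZ hla_mult.
Qed.

Lemma RS_addL {K : fieldType} {L : HLA K} : alpha_perfect L -> forall u u' v : L,
  RS (fun f => f (u + u') v - f u v - f u' v).
Proof.
move=> P u u' v; have [x ->] := al_surj P u; have [x' ->] := al_surj P u'.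
have [y ->] := al_surj P v.
apply: (@RS_gen _ _ [:: (1, hla_alpha L x + hla_alpha L x', hla_alpha L y);
  (-1, hla_alpha L x, hla_alpha L y); (-1, hla_alpha L x', hla_alpha L y)]).
  by left; exists x, x', y.
by move=> f; rewrite /ev !big_cons big_nil /=; ring.
Qed.

Lemma RS_addR {K : fieldType} {L : HLA K} : alpha_perfect L -> forall u v v' : L,
  RS (fun f => f u (v + v') - f u v - f u v').
Proof.
move=> P u v v'; have [x ->] := al_surj P u; have [y ->] := al_surj P v.
have [y' ->] := al_surj P v'.
apply: (@RS_gen _ _ [:: (1, hla_alpha L x, hla_alpha L y + hla_alpha L y');
  (-1, hla_alpha L x, hla_alpha L y); (-1, hla_alpha L x, hla_alpha L y')]).
  by right; left; exists x, y, y'.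
by move=> f; rewrite /ev !big_cons big_nil /=; ring.
Qed.

Lemma RS_scL {K : fieldType} {L : HLA K} : alpha_perfect L -> forall (k : K) (u v : L),
  RS (fun f => f (k *: u) v - k * f u v).
Proof.
move=> P k u v; have [x ->] := al_surj P u; have [y ->] := al_surj P v.
apply: (@RS_gen _ _ [:: (1, k *: hla_alpha L x, hla_alpha L y); (-k, hla_alpha L x, hla_alpha L y)]).
  by right; right; left; exists k, x, y.
by move=> f; rewrite /ev !big_cons big_nil /=; ring.
Qed.

Lemma RS_scR {K : fieldType} {L : HLA K} : alpha_perfect L -> forall (k : K) (u v : L),
  RS (fun f => f u (k *: v) - k * f u v).
Proof.
move=> P k u v; have [x ->] := al_surj P u; have [y ->] := al_surj P v.
apply: (@RS_gen _ _ [:: (1, hla_alpha L x, k *: hla_alpha L y); (-k, hla_alpha L x, hla_alpha L y)]).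
  by right; right; right; left; exists k, x, y.
by move=> f; rewrite /ev !big_cons big_nil /=; ring.
Qed.

Lemma RS_0R {K : fieldType} {L : HLA K} : alpha_perfect L -> forall u : L,
  RS (fun f => f u 0).
Proof.
move=> P u; apply: RS_ext (RS_scR P 0 u 0) => f; by rewrite scale0r mul0r subr0.
Qed.

Lemma RS_0L {K : fieldType} {L : HLA K} : alpha_perfect L -> forall u : L,
  RS (fun f => f 0 u).
Proof.
move=> P u; apply: RS_ext (RS_scL P 0 0 u) => f; by rewrite scale0r mul0r subr0.
Qed.

Lemma RS_I {K : fieldType} {L : HLA K} (x1 x2 x3 : L) :
  RS (fun f => - f (hla_br x1 x2) (hla_alpha L x3) + f (hla_br x1 x3) (hla_alpha L x2)
               + f (hla_alpha L x1) (hla_br x2 x3)).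
Proof.
apply: (@RS_gen _ _ [:: (-1, hla_br x1 x2, hla_alpha L x3); (1, hla_br x1 x3, hla_alpha L x2);
  (1, hla_alpha L x1, hla_br x2 x3)]).
  by right; right; right; right; exists x1, x2, x3.
by move=> f; rewrite /ev !big_cons big_nil /=; ring.
Qed.

Definition evT {K : fieldType} {M G : HLA K} (t : M -> G) (f : G -> G -> K) (ms : seq (K * M * M)) : K :=
  \sum_(e <- ms) e.1.1 * f (t (hla_alpha M e.1.2)) (t (hla_alpha M e.2)).

Definition GoodE {K : fieldType} {M G : HLA K} (t : M -> G) (Phi : (G -> G -> K) -> K) : Prop :=
  exists ms : seq (K * M * M), RS (fun f => Phi f - evT t f ms).

Lemma GoodE_ext {K : fieldType} {M G : HLA K} (t : M -> G) Phi Psi :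
  (forall f, Phi f = Psi f) -> GoodE t Phi -> GoodE t Psi.
Proof. by move=> E [ms H]; exists ms; apply: RS_ext H => f; rewrite E. Qed.

Lemma GoodE_RS {K : fieldType} {M G : HLA K} (t : M -> G) Phi : RS Phi -> GoodE t Phi.
Proof. by move=> H; exists [::]; apply: RS_ext H => f; rewrite /evT big_nil subr0. Qed.

Lemma GoodE_D {K : fieldType} {M G : HLA K} (t : M -> G) Phi Psi :
  GoodE t Phi -> GoodE t Psi -> GoodE t (fun f => Phi f + Psi f).
Proof.
move=> [ms H] [ms' H']; exists (ms ++ ms'); apply: RS_ext (RSD H H') => f.
by rewrite /evT big_cat /=; ring.
Qed.

Lemma GoodE_Z {K : fieldType} {M G : HLA K} (t : M -> G) c Phi :
  GoodE t Phi -> GoodE t (fun f => c * Phi f).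
Proof.
move=> [ms H]; exists [seq (c * e.1.1, e.1.2, e.2) | e <- ms]; apply: RS_ext (RSZ c H) => f.
rewrite /evT big_map mulrBr mulr_sumr; congr (_ - _).
by apply: eq_bigr => e _; rewrite mulrA.
Qed.

Lemma GoodE_base {K : fieldType} {M G : HLA K} (t : M -> G) n1 n2 :
  GoodE t (fun f => f (t (hla_alpha M n1)) (t (hla_alpha M n2))).
Proof.
exists [:: (1, n1, n2)]; apply: RS_ext RS0 => f.
by rewrite /evT big_cons big_nil /=; ring.
Qed.

Lemma GoodE_linR {K : fieldType} {M G : HLA K} (t : M -> G) (X : eqType) :
  alpha_perfect G -> forall (u : G) (l : seq X) (c : X -> K) (v : X -> G),
  (forall x, x \in l -> GoodE t (fun f => f u (v x))) ->
  GoodE t (fun f => f u (\sum_(x <- l) c x *: v x)).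
Proof.
move=> PG u; elim=> [|x l IH] c v H.
  by apply: GoodE_RS; apply: RS_ext (RS_0R PG u) => f; rewrite big_nil.
have Hx : GoodE t (fun f => f u (v x)) by apply: H; rewrite inE eqxx.
have Hl : GoodE t (fun f => f u (\sum_(y <- l) c y *: v y)).
  by apply: IH => y yl; apply: H; rewrite inE yl orbT.
apply: GoodE_ext (GoodE_D (GoodE_D (GoodE_RS _ (RS_addR PG u (c x *: v x) (\sum_(y <- l) c y *: v y)))
   (GoodE_RS _ (RS_scR PG (c x) u (v x)))) (GoodE_D (GoodE_Z (c x) Hx) Hl)) => f.
rewrite big_cons; ring.
Qed.

Lemma GoodE_linL {K : fieldType} {M G : HLA K} (t : M -> G) (X : eqType) :
  alpha_perfect G -> forall (u : G) (l : seq X) (c : X -> K) (v : X -> G),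
  (forall x, x \in l -> GoodE t (fun f => f (v x) u)) ->
  GoodE t (fun f => f (\sum_(x <- l) c x *: v x) u).
Proof.
move=> PG u; elim=> [|x l IH] c v H.
  by apply: GoodE_RS; apply: RS_ext (RS_0L PG u) => f; rewrite big_nil.
have Hx : GoodE t (fun f => f (v x) u) by apply: H; rewrite inE eqxx.
have Hl : GoodE t (fun f => f (\sum_(y <- l) c y *: v y) u).
  by apply: IH => y yl; apply: H; rewrite inE yl orbT.
apply: GoodE_ext (GoodE_D (GoodE_D (GoodE_RS _ (RS_addL PG (c x *: v x) (\sum_(y <- l) c y *: v y) u))
   (GoodE_RS _ (RS_scL PG (c x) (v x) u))) (GoodE_D (GoodE_Z (c x) Hx) Hl)) => f.
rewrite big_cons; ring.
Qed.

Lemma ker_al {K : fieldType} (M G Q : HLA K) (t : {linear M -> G}) (p : {linear G -> Q}) :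
  alpha_perfect M -> (forall g : G, p g = 0 <-> exists m : M, g = t m) ->
  forall g, p g = 0 -> exists n, g = t (hla_alpha M n).
Proof.
move=> PM Hk g /Hk [m ->]; have [n ->] := al_surj PM m; by exists n.
Qed.

Lemma MLR {K : fieldType} (M G Q : HLA K)
    (t : {linear M -> G}) (p : {linear G -> Q}) (s : {linear Q -> G}) :
  alpha_perfect M -> alpha_perfect G -> (forall x : Q, hla_alpha Q x = x) ->
  hla_hom t -> hla_hom p -> hla_hom s ->
  (forall g : G, p g = 0 <-> exists m : M, g = t m) -> (forall q : Q, p (s q) = q) ->
  forall q m, GoodE t (fun f => f (s q) (t m)) /\ GoodE t (fun f => f (t m) (s q)).
Proof.
move=> PM PG alQ [tb ta] [pb pa] [sb sa] Hk ps q m.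
have pt0 y : p (t y) = 0 by apply/Hk; exists y.
have alsq : hla_alpha G (s q) = s q by rewrite -sa alQ.
have [l ->] := PM m.
rewrite linear_sum.
have E : forall e : K * M * M, t (e.1.1 *: hla_br (hla_alpha M e.1.2) (hla_alpha M e.2))
   = e.1.1 *: hla_br (t (hla_alpha M e.1.2)) (t (hla_alpha M e.2)).
  by move=> e; rewrite linearZ tb.
rewrite (eq_bigr _ (fun e _ => E e)).
split.
  apply: (@GoodE_linR K M G t _ PG (s q) l (fun e : K * M * M => e.1.1) (fun e : K * M * M => hla_br (t (hla_alpha M e.1.2)) (t (hla_alpha M e.2)))) => // -[[k a] b] _ /=.
  set x1 := s q; set x2 := t (hla_alpha M a); set x3 := t (hla_alpha M b).
  have [n3 E3] : exists n, hla_br x1 x2 = t (hla_alpha M n).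
    by apply: (ker_al PM Hk); rewrite pb ps pt0 br0r.
  have [n4 E4] : exists n, hla_br x1 x3 = t (hla_alpha M n).
    by apply: (ker_al PM Hk); rewrite pb ps pt0 br0r.
  have A2 : hla_alpha G x2 = t (hla_alpha M (hla_alpha M a)) by rewrite ta.
  have A3 : hla_alpha G x3 = t (hla_alpha M (hla_alpha M b)) by rewrite ta.
  apply: GoodE_ext (GoodE_D (GoodE_RS t (RS_I x1 x2 x3))
     (GoodE_D (GoodE_base t n3 (hla_alpha M b)) (GoodE_Z (-1) (GoodE_base t n4 (hla_alpha M a))))) => f.
  rewrite E3 E4 A2 A3 alsq; ring.
apply: (@GoodE_linL K M G t _ PG (s q) l (fun e : K * M * M => e.1.1) (fun e : K * M * M => hla_br (t (hla_alpha M e.1.2)) (t (hla_alpha M e.2)))) => // -[[k a] b] _ /=.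
set x1 := t (hla_alpha M a); set x2 := t (hla_alpha M b); set x3 := s q.
have [n3 E3] : exists n, hla_br x1 x3 = t (hla_alpha M n).
  by apply: (ker_al PM Hk); rewrite pb ps pt0 br0l.
have [n4 E4] : exists n, hla_br x2 x3 = t (hla_alpha M n).
  by apply: (ker_al PM Hk); rewrite pb ps pt0 br0l.
have A1 : hla_alpha G x1 = t (hla_alpha M (hla_alpha M a)) by rewrite ta.
have A2 : hla_alpha G x2 = t (hla_alpha M (hla_alpha M b)) by rewrite ta.
apply: GoodE_ext (GoodE_D (GoodE_Z (-1) (GoodE_RS t (RS_I x1 x2 x3)))
   (GoodE_D (GoodE_base t n3 (hla_alpha M b)) (GoodE_base t (hla_alpha M a) n4))) => f.
rewrite E3 E4 A1 A2 alsq; ring.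
Qed.

Lemma per_term {K : fieldType} (M G Q : HLA K)
    (t : {linear M -> G}) (p : {linear G -> Q}) (s : {linear Q -> G}) :
  alpha_perfect M -> alpha_perfect G -> (forall x : Q, hla_alpha Q x = x) ->
  hla_hom t -> hla_hom p -> hla_hom s ->
  (forall g : G, p g = 0 <-> exists m : M, g = t m) -> (forall q : Q, p (s q) = q) ->
  forall a b : G, GoodE t (fun f => f a b - f (s (p a)) (s (p b))).
Proof.
move=> PM PG alQ ht hp hs Hk ps.
have H := MLR PM PG alQ ht hp hs Hk ps.
have dec g : exists n, s (p g) + t (hla_alpha M n) = g.
  have [n En] : exists n, g - s (p g) = t (hla_alpha M n).
    by apply: (ker_al PM Hk); rewrite linearB ps subrr.
  by exists n; rewrite -En addrC subrK.
move=> a b; have [n1 <-] := dec a; have [n2 <-] := dec b.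
have pe g n : p (s (p g) + t (hla_alpha M n)) = p g.
  have E0 : p (t (hla_alpha M n)) = 0 by apply/Hk; exists (hla_alpha M n).
  by rewrite linearD ps E0 addr0.
rewrite !pe.
set A := s (p a); set B := s (p b).
set T1 := t (hla_alpha M n1); set T2 := t (hla_alpha M n2).
have [HA2 _] := H (p a) (hla_alpha M n2).
have [_ HB1] := H (p b) (hla_alpha M n1).
apply: GoodE_ext (GoodE_D (GoodE_D (GoodE_RS t (RS_addL PG A T1 (B + T2)))
   (GoodE_RS t (RS_addR PG A B T2)))
   (GoodE_D (GoodE_D HA2 HB1) (GoodE_D (GoodE_RS t (RS_addR PG T1 B T2)) (GoodE_base t n1 n2)))) => f.
rewrite -/A -/B -/T1 -/T2; ring.
Qed.

Theorem proposition5p1 (K : fieldType) (M G Q : HLA K)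
    (t : {linear M -> G}) (p : {linear G -> Q}) (s : {linear Q -> G}) :
  alpha_perfect M -> alpha_perfect G -> alpha_perfect Q ->
  (forall x : Q, hla_alpha Q x = x) ->
  hla_hom t -> hla_hom p -> hla_hom s ->
  injective t ->
  (forall q : Q, exists g : G, p g = q) ->
  (forall g : G, p g = 0 <-> exists m : M, g = t m) ->
  (forall q : Q, p (s q) = q) ->
  forall w : fsum G, fs_on w ->
    (* [w] in Ker(pi), pi = uce_alpha(p) *)
    (uce_zero (fs_map p w) <->
     (* [w] in the span of the classes {t(alpha_M m1), t(alpha_M m2)} *)
     exists ms : seq (K * M * M),
       uce_zero (fs_sub w [seq (e.1.1, t (hla_alpha M e.1.2), t (hla_alpha M e.2)) | e <- ms]))
    /\
    ((exists ms : seq (K * M * M),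
       uce_zero (fs_sub w [seq (e.1.1, t (hla_alpha M e.1.2), t (hla_alpha M e.2)) | e <- ms]))
     <->
     (* [w] in tau(uce_alpha(M)) *)
     exists v : fsum M, fs_on v /\ uce_zero (fs_sub w (fs_map t v))).
Proof.
move=> PM PG PQ alQ ht hp hs tinj psurj Hk ps w won.
have pt0 y : p (t y) = 0 by apply/Hk; exists y.
have Tev f ms : ev f [seq (e.1.1, t (hla_alpha M e.1.2), t (hla_alpha M e.2)) | e <- ms] = evT t f ms.
  by rewrite /ev big_map.
have wgood : GoodE t (fun f => ev f w - ev (fun a b => f (s (p a)) (s (p b))) w).
  elim: (w) => [|e w' IH].
    by apply: GoodE_RS; apply: RS_ext RS0 => f; rewrite /ev !big_nil subr0.
  apply: GoodE_ext (GoodE_D (GoodE_Z e.1.1 (per_term PM PG alQ ht hp hs Hk ps e.1.2 e.2)) IH) => f.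
  rewrite /ev !big_cons; ring.
split; split.
- move/uce_zeroP => H.
  have H' := RS_map hs H.
  have [ms Hms] := wgood.
  exists ms; apply/uce_zeroP.
  apply: RS_ext (RSD Hms H') => f /=; rewrite ev_sub Tev ev_map /=; ring.
- move=> [ms /uce_zeroP H]; apply/uce_zeroP.
  have H' := RS_map hp H.
  have H0 := RSZ (\sum_(e <- ms) e.1.1) (RS_0R PQ 0).
  apply: RS_ext (RSD H' H0) => f /=; rewrite ev_sub Tev ev_map /evT.
  rewrite (eq_bigr (fun e => e.1.1 * f 0 0)) => [|e _]; last by rewrite !pt0.
  rewrite -mulr_suml; ring.
- move=> [ms H]; exists [seq (e.1.1, hla_alpha M e.1.2, hla_alpha M e.2) | e <- ms]; split.
    by move=> e /mapP [e' _ ->] /=; split; [exists e'.1.2 | exists e'.2].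
  by rewrite /fs_map -map_comp.
- move=> [v [von H]].
  have [ms Ems] : exists ms : seq (K * M * M),
      fs_map t v = [seq (e.1.1, t (hla_alpha M e.1.2), t (hla_alpha M e.2)) | e <- ms].
    elim: v von {H} => [|e v IH] von; first by exists [::].
    have [[x Ex] [y Ey]] := von e (mem_head _ _).
    have [ms Ems] : exists ms : seq (K * M * M),
      fs_map t v = [seq (e.1.1, t (hla_alpha M e.1.2), t (hla_alpha M e.2)) | e <- ms].
      by apply: IH => e' he'; apply: von; rewrite inE he' orbT.
    exists ((e.1.1, x, y) :: ms); rewrite /fs_map /= in Ems *.
    by rewrite Ex Ey -Ems.
  by exists ms; rewrite -Ems.
Qed.
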